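(* Let $0\le \alpha\le 1$ and let $f,g$ be infinitely differentiable functions on $(0,\infty)$ (extending to $x=0$) with $f(0)=0$, such that all series below converge absolutely, so that they may be rearranged. For real $\beta$ define the operator $$D_x^{\beta}[h](x)=\sum_{k=0}^{\infty}\frac{\sin[\pi(\beta-k)]}{\pi(\beta-k)}\,\frac{\Gamma(\beta+1)}{\Gamma(k+1)}\,x^{k-\beta}\,\frac{d^k}{dx^k}\big[h(x)-h(0)\big],\qquad x>0,$$ where $\frac{\sin[\pi(\beta-k)]}{\pi(\beta-k)}$ is interpreted as $1$ when $\beta-k=0$. Then for $x>0$, $$D_x^{\alpha}[f(x)\,g(x)]=\sum_{l=0}^{\infty}C_\alpha^l\,g^{(l)}(x)\,D_x^{(\alpha-l)}[f(x)],$$ where $C_\alpha^l=\frac{\Gamma(\alpha+1)}{\Gamma(l+1)\Gamma(\alpha-l+1)}$ is the generalized binomial coefficient (equal to $\alpha(\alpha-1)\cdots(\alpha-l+1)/l!$). In particular, for $\alpha=n\in\mathbb{N}$ the sum terminates at $l=n$ and reduces to the Leibniz rule $\sum_{l=0}^n\binom{n}{l}g^{(l)}f^{(n-l)}=(fg)^{(n)}$.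
   Context: For $0\le\alpha\le1$ the operator $D_x^\alpha$ defined by the series above is the series expansion the paper uses for the Caputo fractional derivative ${}^C D_x^\alpha f(x)=\frac{1}{\Gamma(1-\alpha)}\int_0^x (x-t)^{-\alpha} f'(t)\,dt$, $x>0$; for $\alpha-l$ with $l\ge1$ the same series defines $D_x^{(\alpha-l)}$. The paper adopts the convention of replacing every function $f$ by $f(x)-f(0)$, i.e. functions are taken to vanish at the origin. *)

(* Defs.v *)
From Stdlib Require Import Reals Arith Factorial.
From Coquelicot Require Import Coquelicot.
Open Scope R_scope.

Fixpoint poch (z : R) (n : nat) : R :=
  match n with
  | O => z
  | S m => poch z m * (z + INR (S m))
  end.

(* Real Gamma function, via Gauss's limit formula
   Gamma z = lim_{n->oo} n! n^z / (z (z+1) ... (z+n)),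
   valid for every real z that is not a non-positive integer.
   At the poles z = 0,-1,-2,... the sequence is eventually 0 (since / 0 = 0),
   so Gamma takes the value 0 there, i.e. 1/Gamma = 0 at the poles
   (the usual convention making C_alpha^l = 0 for l > alpha integer). *)
Definition Gamma (z : R) : R :=
  real (Lim_seq (fun n => INR (Factorial.fact n) * Rpower (INR n) z / poch z n)).

Definition sinc_pi (z : R) : R :=
  if Req_EM_T z 0 then 1 else sin (PI * z) / (PI * z).

Definition Dterm (beta : R) (h : R -> R) (x : R) (k : nat) : R :=
  sinc_pi (beta - INR k) * (Gamma (beta + 1) / Gamma (INR k + 1))
  * Rpower x (INR k - beta) * Derive_n (fun y => h y - h 0) k x.

Definition Dfrac (beta : R) (h : R -> R) (x : R) : R := Series (Dterm beta h x).

Definition gbinom (a : R) (l : nat) : R :=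
  Gamma (a + 1) / (Gamma (INR l + 1) * Gamma (a - INR l + 1)).

(* Main.v *)
Require Import Defs.
From Stdlib Require Import Reals Lra Lia Psatz.
From Coquelicot Require Import Coquelicot.
Open Scope R_scope.

Definition gterm (z : R) (n : nat) : R :=
  INR (Factorial.fact n) * Rpower (INR n) z / poch z n.

Lemma Gamma_lim z (L : R) : is_lim_seq (gterm z) L -> Gamma z = L.
Proof. intro H. unfold Gamma. change (real (Lim_seq (gterm z)) = L).
  rewrite (is_lim_seq_unique _ _ H). reflexivity. Qed.

Lemma poch_shift w n : poch (w+1) n * w = poch w n * (w + INR n + 1).
Proof.
  induction n as [|n IH].
  - simpl. ring.
  - change (poch (w+1) (S n)) with (poch (w+1) n * (w + 1 + INR (S n))). change (poch w (S n)) with (poch w n * (w + INR (S n))). rewrite !S_INR.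
    transitivity ((poch (w+1) n * w) * (w + 1 + (INR n + 1))). ring.
    rewrite IH. ring.
Qed.

Lemma exp_le_mono x y : x <= y -> exp x <= exp y.
Proof. intro H. destruct (Rle_lt_or_eq_dec _ _ H). left; apply exp_increasing; auto.
  subst; right; reflexivity. Qed.

Lemma ln_le_xm1 y : 0 < y -> ln y <= y - 1.
Proof. intro H. pose proof (exp_ineq1_le (ln y)). rewrite exp_ln in H0; auto. lra. Qed.

Lemma gterm_up w n : w <> 0 -> 0 < INR n -> w + INR n + 1 <> 0 ->
  gterm (w+1) n = gterm w n * (INR n * w / (w + INR n + 1)).
Proof.
  intros Hw Hn Hd. unfold gterm. rewrite Rpower_plus, Rpower_1 by auto.
  pose proof (poch_shift w n) as Hs.
  destruct (Req_dec (poch w n) 0) as [H0|H0].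
  - rewrite H0 in Hs |- *. rewrite Rmult_0_l in Hs.
    destruct (Rmult_integral _ _ Hs) as [H1|H1]; [|contradiction].
    rewrite H1. unfold Rdiv. rewrite Rinv_0. ring.
  - assert (E : poch (w+1) n = poch w n * (w + INR n + 1) / w).
    { rewrite <- Hs. field. auto. }
    rewrite E. field. repeat split; auto.
Qed.

Lemma lim_ratio c : is_lim_seq (fun n => INR n / (INR n + c)) 1.
Proof.
  assert (Hi : is_lim_seq (fun n => / INR n) 0).
  { pose proof (is_lim_seq_inv INR p_infty is_lim_seq_INR) as H.
    simpl in H. apply H. discriminate. }
  assert (H2 : is_lim_seq (fun n => / (1 + c * / INR n)) (/ (1 + c * 0))).
  { apply (is_lim_seq_inv _ (Finite (1 + c*0))).
    apply is_lim_seq_plus'. apply is_lim_seq_const.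
    apply is_lim_seq_mult'. apply is_lim_seq_const. exact Hi.
    intro E; injection E; lra. }
  replace (/ (1 + c * 0)) with 1 in H2 by field.
  apply is_lim_seq_ext_loc with (2 := H2).
  pose proof (is_lim_seq_INR (fun y => Rabs c + 1 < y)) as Hev.
  assert (Hev' : eventually (fun n => Rabs c + 1 < INR n)).
  { apply Hev. exists (Rabs c + 1). auto. }
  revert Hev'. apply filter_imp. intros n Hn.
  pose proof (Rabs_pos c). pose proof (Rle_abs (-c)). rewrite Rabs_Ropp in H0.
  field. split; lra.
Qed.

Lemma ev_big w : eventually (fun n => Rabs w + 1 < INR n).
Proof. apply (is_lim_seq_INR (fun y => Rabs w + 1 < y)). exists (Rabs w + 1). auto. Qed.

Lemma gterm_lim_up w (L : R) : w <> 0 -> is_lim_seq (gterm w) L ->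
  is_lim_seq (gterm (w+1)) (L * w).
Proof.
  intros Hw H.
  assert (H2 : is_lim_seq (fun n => gterm w n * (w * (INR n / (INR n + (w+1))))) (L * (w * 1))).
  { apply is_lim_seq_mult'; auto. apply is_lim_seq_mult'. apply is_lim_seq_const. apply lim_ratio. }
  rewrite Rmult_1_r in H2.
  apply is_lim_seq_ext_loc with (2 := H2).
  generalize (ev_big w). apply filter_imp. intros n Hn.
  pose proof (Rabs_pos w). pose proof (Rle_abs (-w)). rewrite Rabs_Ropp in H1.
  rewrite gterm_up; auto; try lra. f_equal. field. lra.
Qed.

Lemma gterm_lim_down w (L : R) : w <> 0 -> is_lim_seq (gterm (w+1)) L ->
  is_lim_seq (gterm w) (L / w).
Proof.
  intros Hw H.
  assert (H2 : is_lim_seq (fun n => gterm (w+1) n * / (w * (INR n / (INR n + (w+1))))) (L * / (w * 1))).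
  { apply is_lim_seq_mult'; auto.
    apply (is_lim_seq_inv _ (Finite (w*1))).
    apply is_lim_seq_mult'. apply is_lim_seq_const. apply lim_ratio.
    intro E; injection E; lra. }
  replace (L * / (w * 1)) with (L / w) in H2 by (field; auto).
  apply is_lim_seq_ext_loc with (2 := H2).
  generalize (ev_big w). apply filter_imp. intros n Hn.
  pose proof (Rabs_pos w). pose proof (Rle_abs (-w)). rewrite Rabs_Ropp in H1.
  rewrite gterm_up; auto; try lra. field. repeat split; lra.
Qed.

Lemma poch1 n : poch 1 n = INR (Factorial.fact (S n)).
Proof.
  induction n as [|n IH]. simpl. ring.
  change (poch 1 (S n)) with (poch 1 n * (1 + INR (S n))). rewrite IH.
  change (Factorial.fact (S (S n))) with (S (S n) * Factorial.fact (S n))%nat.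
  rewrite mult_INR. rewrite (S_INR (S n)). ring.
Qed.

Lemma gterm1 : is_lim_seq (gterm 1) 1.
Proof.
  pose proof (lim_ratio 1) as H.
  apply is_lim_seq_ext_loc with (2 := H).
  generalize (ev_big 0). apply filter_imp. intros n Hn.
  rewrite Rabs_R0 in Hn.
  unfold gterm. rewrite Rpower_1 by lra. rewrite poch1.
  change (Factorial.fact (S n)) with (S n * Factorial.fact n)%nat.
  rewrite mult_INR, S_INR. field. split. apply INR_fact_neq_0. lra.
Qed.

Lemma gterm_nat k : is_lim_seq (gterm (INR k + 1)) (INR (Factorial.fact k)).
Proof.
  induction k as [|k IH].
  - change (INR 0) with 0. change (INR (Factorial.fact 0)) with 1. replace (0+1) with 1 by ring.
    exact gterm1.
  - rewrite S_INR. 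
    change (Factorial.fact (S k)) with (S k * Factorial.fact k)%nat.
    rewrite mult_INR, S_INR.
    replace ((INR k + 1) * INR (Factorial.fact k)) with (INR (Factorial.fact k) * (INR k + 1)) by ring.
    apply gterm_lim_up; auto. pose proof (pos_INR k). lra.
Qed.

Lemma Gamma_nat k : Gamma (INR k + 1) = INR (Factorial.fact k).
Proof. apply Gamma_lim. apply gterm_nat. Qed.

Lemma poch_pos z n : 0 < z -> 0 < poch z n.
Proof. intro Hz. induction n as [|n IH]. simpl; auto.
  change (poch z (S n)) with (poch z n * (z + INR (S n))).
  pose proof (pos_INR (S n)). apply Rmult_lt_0_compat; lra. Qed.

Lemma gterm_pos z n : 0 < z -> 0 < gterm z n.
Proof. intro Hz. unfold gterm, Rdiv. apply Rmult_lt_0_compat.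
  apply Rmult_lt_0_compat. apply lt_0_INR, Factorial.lt_O_fact. unfold Rpower; apply exp_pos.
  apply Rinv_0_lt_compat, poch_pos; auto. Qed.

Lemma gterm_step z m : 0 < z -> 0 < INR m ->
  gterm z (S m) = gterm z m *
    (INR (S m) / (z + INR (S m)) * exp (z * (ln (INR (S m)) - ln (INR m)))).
Proof.
  intros Hz Hm. unfold gterm.
  change (poch z (S m)) with (poch z m * (z + INR (S m))).
  change (Factorial.fact (S m)) with (S m * Factorial.fact m)%nat.
  rewrite mult_INR. unfold Rpower.
  replace (z * (ln (INR (S m)) - ln (INR m))) with (z * ln (INR (S m)) + - (z * ln (INR m))) by ring.
  rewrite exp_plus, exp_Ropp.
  pose proof (poch_pos z m Hz). pose proof (exp_pos (z * ln (INR m))).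
  pose proof (pos_INR (S m)).
  field. repeat split; lra.
Qed.

Lemma ratio_ge1 z m : 0 < z -> 0 < INR m ->
  1 <= INR (S m) / (z + INR (S m)) * exp (z * (ln (INR (S m)) - ln (INR m))).
Proof.
  intros Hz Hm. rewrite S_INR. set (M := INR m) in *.
  assert (Hd : / (M+1) <= ln (M+1) - ln M).
  { assert (H := ln_le_xm1 (M / (M+1))). rewrite ln_div in H by lra.
    assert (M / (M+1) - 1 = - / (M+1)) by (field; lra). 
    assert (0 < M / (M + 1)). apply Rdiv_lt_0_compat; lra. lra. }
  assert (He : 1 + z * / (M+1) <= exp (z * (ln (M+1) - ln M))).
  { eapply Rle_trans; [|apply exp_ineq1_le]. apply Rplus_le_compat_l.
    apply Rmult_le_compat_l; lra. }
  apply Rle_trans with ((M+1) / (z + (M+1)) * (1 + z * / (M+1))).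
  - right. field. lra.
  - apply Rmult_le_compat_l; auto. left. apply Rdiv_lt_0_compat; lra.
Qed.

Lemma ratio_le z m : 0 < z <= 1 -> 0 < INR m ->
  INR (S m) / (z + INR (S m)) * exp (z * (ln (INR (S m)) - ln (INR m)))
  <= exp (2 / INR m - 2 / INR (S m)).
Proof.
  intros Hz Hm. rewrite S_INR. set (M := INR m) in *.
  assert (Hd : ln (M+1) - ln M <= / M).
  { assert (H := ln_le_xm1 ((M+1) / M)). rewrite ln_div in H by lra.
    assert ((M+1) / M - 1 = / M) by (field; lra).
    assert (0 < (M + 1) / M). apply Rdiv_lt_0_compat; lra. lra. }
  assert (H1 : (M+1) / (z + (M+1)) <= exp (- (z / (z + (M+1))))).
  { apply Rle_trans with (1 + - (z / (z + (M+1)))); [|apply exp_ineq1_le]. right. field. lra. }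
  assert (H2 : exp (z * (ln (M+1) - ln M)) <= exp (z / M)).
  { apply exp_le_mono. unfold Rdiv. apply Rmult_le_compat_l; lra. }
  eapply Rle_trans. apply Rmult_le_compat; [left; apply Rdiv_lt_0_compat; lra | left; apply exp_pos | exact H1 | exact H2].
  rewrite <- exp_plus. apply exp_le_mono.
  assert (HK0 : 0 <= (1-z)*(2+z)) by (apply Rmult_le_pos; lra). assert (HK1 : 0 <= (M+1) * ((1-z)*(2+z))) by (apply Rmult_le_pos; lra). assert (HK : 0 <= 2 * z + (M+1) * (2 - z*z - z)) by (replace (2 - z*z - z) with ((1-z)*(2+z)) by ring; lra).
  assert (E : 2 / M - 2 / (M + 1) - (- (z / (z + (M + 1))) + z / M)
              = (2 * z + (M+1) * (2 - z*z - z)) / (M * (M+1) * (z + M + 1))) by (field; lra).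
  assert (0 <= (2 * z + (M+1) * (2 - z*z - z)) / (M * (M+1) * (z + M + 1))).
  { apply Rmult_le_pos; auto. left. apply Rinv_0_lt_compat.
    apply Rmult_lt_0_compat; [apply Rmult_lt_0_compat|]; lra. }
  lra.
Qed.

Lemma gterm_base z : 0 < z <= 1 -> exists L, 0 < L /\ is_lim_seq (gterm z) L.
Proof.
  intros Hz. set (u := fun n => gterm z (S n)).
  assert (Hpos : forall n, 0 < u n) by (intro; apply gterm_pos; lra).
  assert (Hst : forall n, u (S n) = u n *
    (INR (S (S n)) / (z + INR (S (S n))) * exp (z * (ln (INR (S (S n))) - ln (INR (S n)))))).
  { intro n. unfold u. apply gterm_step. lra. apply lt_0_INR; lia. }
  assert (Hinc : forall n, u n <= u (S n)).
  { intro n. rewrite Hst. pose proof (Hpos n).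
    pose proof (ratio_ge1 z (S n) ltac:(lra) ltac:(apply lt_0_INR; lia)). nra. }
  assert (Hb : forall n, u n <= u 0%nat * exp (2 - 2 / INR (S n))).
  { induction n as [|n IH].
    - replace (2 - 2 / INR 1) with 0 by (simpl; field). rewrite exp_0. lra.
    - rewrite Hst. pose proof (Hpos n).
      pose proof (ratio_le z (S n) Hz ltac:(apply lt_0_INR; lia)).
      eapply Rle_trans. apply Rmult_le_compat; [lra| |exact IH|exact H0].
      left. eapply Rlt_le_trans with 1. lra. apply ratio_ge1. lra. apply lt_0_INR; lia.
      rewrite Rmult_assoc, <- exp_plus. right. f_equal. f_equal. ring. }
  assert (Hb2 : forall n, u n <= u 0%nat * exp 2).
  { intro n. eapply Rle_trans. apply Hb. apply Rmult_le_compat_l. left; auto.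
    apply exp_le_mono. assert (0 < 2 / INR (S n)). apply Rdiv_lt_0_compat. lra. apply lt_0_INR; lia. lra. }
  destruct (ex_finite_lim_seq_incr u _ Hinc Hb2) as [L HL].
  exists L. split.
  - assert (H := is_lim_seq_le (fun _ => u 0%nat) u (u 0%nat) L).
    simpl in H. assert (u 0%nat <= L). apply H.
    intro n. induction n. lra. eapply Rle_trans. apply IHn. apply Hinc.
    apply is_lim_seq_const. exact HL. pose proof (Hpos 0%nat). lra.
  - apply is_lim_seq_incr_1. exact HL.
Qed.

Lemma GammaNZ a : 0 < a < 1 -> forall l, Gamma (a - INR l + 1) <> 0.
Proof.
  intros Ha.
  destruct (gterm_base a ltac:(lra)) as [L0 [HL0 HL]].
  assert (P : forall j, exists L, L <> 0 /\ is_lim_seq (gterm (a - INR j)) L).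
  { induction j as [|j [L [HLn HLj]]].
    - exists L0. split. lra. replace (a - INR 0) with a by (simpl; ring). exact HL.
    - exists (L / (a - INR (S j))). split.
      + pose proof (pos_INR j). rewrite S_INR. unfold Rdiv. apply Rmult_integral_contrapositive.
        split; auto. apply Rinv_neq_0_compat. lra.
      + apply gterm_lim_down. pose proof (pos_INR j). rewrite S_INR. lra.
        replace (a - INR (S j) + 1) with (a - INR j) by (rewrite S_INR; ring). exact HLj. }
  intro l. destruct l as [|l].
  - replace (a - INR 0 + 1) with (a + 1) by (simpl; ring).
    rewrite (Gamma_lim _ (L0 * a)). apply Rmult_integral_contrapositive; split; lra.
    apply gterm_lim_up. lra. exact HL.
  - destruct (P l) as [L [HLn HLj]].
    replace (a - INR (S l) + 1) with (a - INR l) by (rewrite S_INR; ring).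
    rewrite (Gamma_lim _ L HLj). exact HLn.
Qed.

Lemma GZ a l : 0 <= a <= 1 -> Gamma (a - INR l + 1) = 0 ->
  (a = 0 /\ (1 <= l)%nat) \/ (a = 1 /\ (2 <= l)%nat).
Proof.
  intros Ha HG.
  assert (G1 : Gamma 1 = 1).
  { replace 1 with (INR 0 + 1) at 1 by (simpl; ring). rewrite Gamma_nat. reflexivity. }
  assert (G2 : Gamma 2 = 1).
  { replace 2 with (INR 1 + 1) at 1 by (simpl; ring). rewrite Gamma_nat. reflexivity. }
  destruct (Req_dec a 0) as [E0|E0].
  - left. split; auto. destruct l as [|l]. 2: lia.
    exfalso. subst. replace (0 - INR 0 + 1) with 1 in HG by (simpl; ring). lra.
  - destruct (Req_dec a 1) as [E1|E1].
    + right. split; auto. subst. destruct l as [|[|l]]. 3: lia.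
      * replace (1 - INR 0 + 1) with 2 in HG by (simpl; ring). lra.
      * replace (1 - INR 1 + 1) with 1 in HG by (simpl; ring). lra.
    + exfalso. apply (GammaNZ a ltac:(lra) l HG).
Qed.

Fixpoint ssum (u : nat -> R) (n : nat) : R :=
  match n with O => 0 | S n => ssum u n + u n end.

Lemma ssum_ext_lt u v n : (forall l, (l < n)%nat -> u l = v l) -> ssum u n = ssum v n.
Proof. induction n; simpl; intros H; auto. rewrite IHn, H; auto. Qed.

Lemma ssum_plus u v n : ssum (fun l => u l + v l) n = ssum u n + ssum v n.
Proof. induction n; simpl; [ring|rewrite IHn; ring]. Qed.

Lemma ssum_minus u v n : ssum (fun l => u l - v l) n = ssum u n - ssum v n.
Proof. induction n; simpl; [ring|rewrite IHn; ring]. Qed.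

Lemma ssum_scal c u n : ssum (fun l => c * u l) n = c * ssum u n.
Proof. induction n; simpl; [ring|rewrite IHn; ring]. Qed.

Lemma ssum_shift u n : ssum u (S n) = u 0%nat + ssum (fun l => u (S l)) n.
Proof. induction n. simpl; ring. change (ssum u (S (S n))) with (ssum u (S n) + u (S n)).
  rewrite IHn. simpl. ring. Qed.

Lemma ssum_split u a b : ssum u (a + b) = ssum u a + ssum (fun i => u (a + i)%nat) b.
Proof. induction b. rewrite Nat.add_0_r. simpl; ring.
  rewrite Nat.add_succ_r. simpl. rewrite IHb. ring. Qed.

Lemma ssum_le u v n : (forall l, (l < n)%nat -> u l <= v l) -> ssum u n <= ssum v n.
Proof. induction n; simpl; intros H. lra. apply Rplus_le_compat; auto. Qed.

Lemma ssum_abs u n : Rabs (ssum u n) <= ssum (fun l => Rabs (u l)) n.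
Proof. induction n; simpl. rewrite Rabs_R0; lra.
  eapply Rle_trans. apply Rabs_triang. lra. Qed.

Lemma ssum_const c n : ssum (fun _ => c) n = INR n * c.
Proof. induction n; simpl ssum. simpl; ring. rewrite IHn, S_INR; ring. Qed.

Lemma ssum_nonneg u n : (forall l, 0 <= u l) -> 0 <= ssum u n.
Proof. intro H. induction n; simpl. lra. pose proof (H n); lra. Qed.

Lemma sum_n_ssum u n : sum_n u n = ssum u (S n).
Proof. induction n. rewrite sum_O. simpl. apply eq_sym, Rplus_0_l.
  rewrite sum_Sn, IHn. reflexivity. Qed.

Lemma is_series_ssum a l : is_series a l <-> is_lim_seq (ssum a) l.
Proof.
  split; intro H.
  - apply is_lim_seq_incr_1.
    apply is_lim_seq_ext with (sum_n a). intro; apply sum_n_ssum. exact H.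
  - change (is_lim_seq (sum_n a) l).
    apply is_lim_seq_ext with (fun n => ssum a (S n)). intro; symmetry; apply sum_n_ssum.
    apply is_lim_seq_incr_1 in H. exact H.
Qed.

Lemma C_n0 n : Binomial.C n 0 = 1.
Proof. unfold Binomial.C. rewrite Nat.sub_0_r. simpl (Factorial.fact 0). simpl INR.
  field. apply INR_fact_neq_0. Qed.

Lemma C_nn n : Binomial.C n n = 1.
Proof. unfold Binomial.C. rewrite Nat.sub_diag. simpl (Factorial.fact 0). simpl INR.
  field. apply INR_fact_neq_0. Qed.

Lemma binom_step (G F : nat -> R) k :
  ssum (fun l => Binomial.C k l * (G (S l) * F (k - l)%nat + G l * F (S (k - l)))) (S k)
  = ssum (fun l => Binomial.C (S k) l * G l * F (S k - l)%nat) (S (S k)).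
Proof.
  rewrite (ssum_ext_lt _ (fun l => Binomial.C k l * G (S l) * F (k - l)%nat + Binomial.C k l * G l * F (S (k - l)))) by (intros; ring).
  rewrite ssum_plus.
  rewrite (ssum_shift (fun l => Binomial.C (S k) l * G l * F (S k - l)%nat)).
  change (ssum (fun l => Binomial.C (S k) (S l) * G (S l) * F (S k - S l)%nat) (S k))
    with (ssum (fun l => Binomial.C (S k) (S l) * G (S l) * F (S k - S l)%nat) k
          + Binomial.C (S k) (S k) * G (S k) * F (S k - S k)%nat).
  rewrite (ssum_ext_lt (fun l => Binomial.C (S k) (S l) * G (S l) * F (S k - S l)%nat)
     (fun l => Binomial.C k l * G (S l) * F (k - l)%nat + Binomial.C k (S l) * G (S l) * F (k - l)%nat)).
  2:{ intros l Hl. rewrite <- Binomial.pascal by auto. simpl (S k - S l)%nat. ring. }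
  rewrite ssum_plus.
  change (ssum (fun l => Binomial.C k l * G (S l) * F (k - l)%nat) (S k))
    with (ssum (fun l => Binomial.C k l * G (S l) * F (k - l)%nat) k
          + Binomial.C k k * G (S k) * F (k - k)%nat).
  rewrite (ssum_shift (fun l => Binomial.C k l * G l * F (S (k - l)))).
  rewrite (ssum_ext_lt (fun l => Binomial.C k (S l) * G (S l) * F (S (k - S l)))
     (fun l => Binomial.C k (S l) * G (S l) * F (k - l)%nat)).
  2:{ intros l Hl. replace (S (k - S l)) with (k - l)%nat by lia. reflexivity. }
  rewrite !C_n0, !C_nn. rewrite Nat.sub_0_r.
  simpl (S k - 0)%nat. simpl (S k - S k)%nat. ring.
Qed.

Lemma is_derive_ssum (F : nat -> R -> R) (F' : nat -> R) y n :
  (forall l, (l < n)%nat -> is_derive (F l) y (F' l)) ->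
  is_derive (fun t => ssum (fun l => F l t) n) y (ssum F' n).
Proof.
  induction n; intros H.
  - exact (is_derive_const (K:=R_AbsRing) (0:R) y).
  - simpl. apply (is_derive_plus (fun t => ssum (fun l => F l t) n) (F n)).
    apply IHn; auto. apply H; lia.
Qed.

Lemma leibniz (f g : R -> R) :
  (forall (n : nat) (y : R), 0 < y -> ex_derive_n f n y) ->
  (forall (n : nat) (y : R), 0 < y -> ex_derive_n g n y) ->
  forall k y, 0 < y ->
  Derive_n (fun t => f t * g t) k y
  = ssum (fun l => Binomial.C k l * Derive_n g l y * Derive_n f (k - l)%nat y) (S k).
Proof.
  intros Hf Hg k. induction k as [|k IH]; intros y Hy.
  - simpl. rewrite C_n0. ring.
  - change (Derive_n (fun t => f t * g t) (S k) y) with (Derive (Derive_n (fun t => f t * g t) k) y).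
    rewrite (Derive_ext_loc _ (fun t => ssum (fun l => Binomial.C k l * Derive_n g l t * Derive_n f (k - l)%nat t) (S k))).
    2:{ generalize (open_gt 0 y Hy). apply filter_imp. intros t Ht. apply IH; auto. }
    etransitivity; [|exact (binom_step (fun l => Derive_n g l y) (fun l => Derive_n f l y) k)].
    apply is_derive_unique. apply is_derive_ssum. intros l Hl.
    assert (Dg : is_derive (Derive_n g l) y (Derive_n g (S l) y)).
    { apply Derive_correct. apply (Hg (S l) y Hy). }
    assert (Df : is_derive (Derive_n f (k - l)) y (Derive_n f (S (k - l)) y)).
    { apply Derive_correct. apply (Hf (S (k - l)) y Hy). }
    replace (Binomial.C k l * (Derive_n g (S l) y * Derive_n f (k - l)%nat y + Derive_n g l y * Derive_n f (S (k - l)) y))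
      with (Binomial.C k l * (Derive_n g (S l) y * Derive_n f (k - l)%nat y + Derive_n g l y * Derive_n f (S (k - l)) y)) by ring.
    apply is_derive_ext with (fun t => Binomial.C k l * (Derive_n g l t * Derive_n f (k - l)%nat t)).
    intro t; symmetry; apply Rmult_assoc.
    apply (is_derive_scal (fun t => Derive_n g l t * Derive_n f (k - l)%nat t)).
    eapply is_derive_ext. intro t; reflexivity.
    replace (Derive_n g (S l) y * Derive_n f (k - l)%nat y + Derive_n g l y * Derive_n f (S (k - l)) y)
      with (plus (mult (Derive_n g (S l) y) (Derive_n f (k - l)%nat y)) (mult (Derive_n g l y) (Derive_n f (S (k - l)) y))) by reflexivity.
    apply (is_derive_mult (Derive_n g l) (Derive_n f (k - l))); auto.
    intros; apply Rmult_comm.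
Qed.

Lemma sumf_ssum a n : sum_f_R0 a n = ssum a (S n).
Proof. rewrite <- sum_n_Reals. apply sum_n_ssum. Qed.

Lemma tailbound a j : ex_series (fun n => Rabs (a n)) ->
  Rabs (Series a - ssum a j) <= Series (fun n => Rabs (a n)) - ssum (fun n => Rabs (a n)) j.
Proof.
  intro H. destruct j as [|j].
  - simpl. rewrite !Rminus_0_r. apply Series_Rabs; auto.
  - rewrite (Series_incr_n a (S j)) by (auto; lia || apply ex_series_Rabs; auto).
    rewrite (Series_incr_n (fun n => Rabs (a n)) (S j)) by (auto; lia).
    simpl pred. rewrite !sumf_ssum.
    replace (ssum a (S j) + Series (fun k => a (S j + k)%nat) - ssum a (S j))
      with (Series (fun k => a (S j + k)%nat)) by ring.
    replace (ssum (fun n => Rabs (a n)) (S j) + Series (fun k => Rabs (a (S j + k)%nat)) - ssum (fun n => Rabs (a n)) (S j))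
      with (Series (fun k => Rabs (a (S j + k)%nat))) by ring.
    apply Series_Rabs. apply (ex_series_incr_n (fun n => Rabs (a n)) (S j)). auto.
Qed.

Lemma triangle (T : nat -> nat -> R) N :
  ssum (fun k => ssum (fun l => T l (k - l)%nat) (S k)) N
  = ssum (fun l => ssum (T l) (N - l)%nat) N.
Proof.
  induction N as [|N IH]. reflexivity.
  change (ssum (fun k => ssum (fun l => T l (k - l)%nat) (S k)) (S N))
    with (ssum (fun k => ssum (fun l => T l (k - l)%nat) (S k)) N + ssum (fun l => T l (N - l)%nat) (S N)).
  rewrite IH.
  change (ssum (fun l => ssum (T l) (S N - l)%nat) (S N))
    with (ssum (fun l => ssum (T l) (S N - l)%nat) N + ssum (T N) (S N - N)%nat).
  rewrite (ssum_ext_lt (fun l => ssum (T l) (S N - l)%nat) (fun l => ssum (T l) (N - l)%nat + T l (N - l)%nat)).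
  2:{ intros l Hl. replace (S N - l)%nat with (S (N - l)) by lia. reflexivity. }
  rewrite ssum_plus. replace (S N - N)%nat with 1%nat by lia.
  change (ssum (fun l => T l (N - l)%nat) (S N)) with (ssum (fun l => T l (N - l)%nat) N + T N (N - N)%nat).
  rewrite Nat.sub_diag. simpl. ring.
Qed.

Lemma unif (P : nat -> nat -> Prop) :
  (forall l, exists J, forall j, (J <= j)%nat -> P l j) ->
  forall L, exists J, forall l j, (l < L)%nat -> (J <= j)%nat -> P l j.
Proof.
  intros H L. induction L as [|L [J1 HJ1]].
  - exists 0%nat. intros; lia.
  - destruct (H L) as [J2 HJ2]. exists (Nat.max J1 J2). intros l j Hl Hj.
    destruct (Nat.eq_dec l L). subst. apply HJ2. lia. apply HJ1; lia.
Qed.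

Lemma double_series (T : nat -> nat -> R) :
  (forall l, ex_series (fun m => Rabs (T l m))) ->
  ex_series (fun l => Series (fun m => Rabs (T l m))) ->
  is_series (fun k => ssum (fun l => T l (k - l)%nat) (S k)) (Series (fun l => Series (T l))).
Proof.
  intros HT HA.
  set (A := fun l => Series (fun m => Rabs (T l m))).
  set (B := fun l => Series (T l)).
  set (Rt := fun l j => A l - ssum (fun m => Rabs (T l m)) j).
  assert (HRb : forall l j, Rabs (B l - ssum (T l) j) <= Rt l j).
  { intros. apply tailbound. auto. }
  assert (HRA : forall l j, Rt l j <= A l).
  { intros. unfold Rt. pose proof (ssum_nonneg (fun m => Rabs (T l m)) j (fun m => Rabs_pos _)). lra. }
  assert (HR0 : forall l, Un_cv (Rt l) 0).
  { intro l. apply is_lim_seq_Reals.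
    assert (H := Series_correct _ (HT l)). apply is_series_ssum in H.
    replace (Finite 0) with (Finite (A l - A l)) by (f_equal; ring).
    apply is_lim_seq_minus'. apply is_lim_seq_const. exact H. }
  assert (HB : ex_series B).
  { apply (ex_series_le (K:=R_AbsRing) (V:=R_CompleteNormedModule)) with A. 2: exact HA. intro l. change (norm (B l)) with (Rabs (B l)).
    apply Series_Rabs. auto. }
  assert (HSA : Un_cv (ssum A) (Series A)).
  { apply is_lim_seq_Reals. apply is_series_ssum. apply Series_correct. auto. }
  assert (HSB : is_lim_seq (ssum B) (Series B)).
  { apply is_series_ssum. apply Series_correct. auto. }
  assert (Hdiff : Un_cv (fun N => ssum B N - ssum (fun k => ssum (fun l => T l (k - l)%nat) (S k)) N) 0).
  { intros eps Heps.
    destruct (HSA (eps/4)) as [L HL]. lra.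
    set (d := eps / (2 * (INR L + 1))).
    assert (Hd : 0 < d). { unfold d. apply Rdiv_lt_0_compat. lra. pose proof (pos_INR L); lra. }
    destruct (unif (fun l j => Rt l j < d)) with (L := L) as [J HJ].
    { intro l. destruct (HR0 l d Hd) as [J HJ]. exists J. intros j Hj.
      specialize (HJ j Hj). unfold R_dist in HJ. rewrite Rminus_0_r in HJ.
      pose proof (Rle_abs (Rt l j)). lra. }
    exists (L + J)%nat. intros N HN. unfold R_dist. rewrite Rminus_0_r.
    rewrite triangle, <- ssum_minus.
    eapply Rle_lt_trans. apply ssum_abs.
    eapply Rle_lt_trans. apply ssum_le with (v := fun l => Rt l (N - l)%nat). intros; apply HRb.
    replace N with (L + (N - L))%nat at 1 by lia.
    rewrite ssum_split.
    assert (H1 : ssum (fun l => Rt l (N - l)%nat) L <= INR L * d).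
    { rewrite <- ssum_const. apply ssum_le. intros l Hl. left. apply HJ; lia. }
    assert (H2 : ssum (fun i => Rt (L + i)%nat (N - (L + i))%nat) (N - L) <= ssum (fun i => A (L + i)%nat) (N - L)).
    { apply ssum_le. intros; apply HRA. }
    assert (H3 : ssum A N = ssum A L + ssum (fun i => A (L + i)%nat) (N - L)).
    { rewrite <- ssum_split. f_equal. lia. }
    assert (H4 := HL N ltac:(lia)). assert (H5 := HL L ltac:(lia)).
    unfold R_dist in H4, H5. apply Rabs_def2 in H4. apply Rabs_def2 in H5.
    assert (H6 : INR L * d < eps / 2).
    { unfold d. pose proof (pos_INR L).
      replace (INR L * (eps / (2 * (INR L + 1)))) with ((eps/2) * (INR L / (INR L + 1))) by (field; lra).
      assert (INR L / (INR L + 1) < 1). { apply Rmult_lt_reg_r with (INR L + 1). lra.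
        unfold Rdiv. rewrite Rmult_assoc, Rinv_l by lra. lra. }
      nra. }
    lra. }
  apply is_series_ssum.
  apply is_lim_seq_Reals in Hdiff.
  assert (H := is_lim_seq_minus' _ _ _ _ HSB Hdiff).
  replace (Series B - 0) with (Series B) in H by ring.
  apply is_lim_seq_ext with (2 := H). intro N. ring.
Qed.

Lemma sinc_zero a k : (a = 0 /\ (1 <= k)%nat) \/ (a = 1 /\ (2 <= k)%nat) ->
  sinc_pi (a - INR k) = 0.
Proof.
  intros H. unfold sinc_pi. destruct (Req_EM_T _ 0) as [E|E].
  - exfalso. destruct H as [[-> Hk]|[-> Hk]]; apply le_INR in Hk; simpl in Hk; lra.
  - replace (sin (PI * (a - INR k))) with 0. unfold Rdiv; ring. symmetry. apply sin_eq_0_1.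
    destruct H as [[-> _]|[-> _]].
    + exists (- Z.of_nat k)%Z. rewrite opp_IZR, <- INR_IZR_INZ. ring.
    + exists (1 - Z.of_nat k)%Z. rewrite minus_IZR, <- INR_IZR_INZ. simpl (IZR 1). ring.
Qed.

Lemma pointwise alpha (f g : R -> R) x :
  0 <= alpha <= 1 ->
  (forall (n : nat) (y : R), 0 < y -> ex_derive_n f n y) ->
  (forall (n : nat) (y : R), 0 < y -> ex_derive_n g n y) ->
  f 0 = 0 -> 0 < x -> forall k,
  Dterm alpha (fun y => f y * g y) x k
  = ssum (fun l => gbinom alpha l * Derive_n g l x * Dterm (alpha - INR l) f x (k - l)%nat) (S k).
Proof.
  intros Ha Hf Hg Hf0 Hx k.
  unfold Dterm at 1.
  rewrite (Derive_n_ext (fun y => f y * g y - f 0 * g 0) (fun y => f y * g y)) by (intro; rewrite Hf0; ring).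
  rewrite leibniz by auto.
  rewrite Gamma_nat.
  rewrite <- ssum_scal. apply ssum_ext_lt. intros l Hl.
  unfold Dterm, gbinom.
  rewrite (Derive_n_ext (fun y => f y - f 0) f) by (intro; rewrite Hf0; ring).
  rewrite !Gamma_nat.
  rewrite minus_INR by lia.
  replace (alpha - INR l - (INR k - INR l)) with (alpha - INR k) by ring.
  replace (INR k - INR l - (alpha - INR l)) with (INR k - alpha) by ring.
  destruct (Req_dec (Gamma (alpha - INR l + 1)) 0) as [HG|HG].
  - rewrite HG. rewrite sinc_zero. ring.
    destruct (GZ alpha l Ha HG) as [[? ?]|[? ?]]; [left|right]; split; auto; lia.
  - unfold Binomial.C. field.
    pose proof (INR_fact_neq_0 l). pose proof (INR_fact_neq_0 k). pose proof (INR_fact_neq_0 (k - l)).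
    repeat split; auto.
Qed.

Theorem mainTheorem1 (alpha : R) (f g : R -> R) (x : R) :
  0 <= alpha <= 1 ->
  (* f, g infinitely differentiable on (0, oo) *)
  (forall (n : nat) (y : R), 0 < y -> ex_derive_n f n y) ->
  (forall (n : nat) (y : R), 0 < y -> ex_derive_n g n y) ->
  (* f, g extend (continuously) to x = 0 *)
  filterlim f (at_right 0) (locally (f 0)) ->
  filterlim g (at_right 0) (locally (g 0)) ->
  f 0 = 0 ->
  0 < x ->
  (* absolute convergence of the series involved *)
  ex_series (fun k => Rabs (Dterm alpha (fun y => f y * g y) x k)) ->
  (forall l : nat, ex_series (fun k => Rabs (Dterm (alpha - INR l) f x k))) ->
  ex_series (fun l => Rabs (gbinom alpha l * Derive_n g l x
                             * Dfrac (alpha - INR l) f x)) ->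
  (* absolute convergence of the double series, allowing rearrangement *)
  ex_series (fun l => Series (fun m => Rabs (gbinom alpha l * Derive_n g l x
                                              * Dterm (alpha - INR l) f x m))) ->
  Dfrac alpha (fun y => f y * g y) x
  = Series (fun l => gbinom alpha l * Derive_n g l x * Dfrac (alpha - INR l) f x).
Proof.
  intros Ha Hf Hg _ _ Hf0 Hx _ H7 _ H9.
  set (T := fun l m => gbinom alpha l * Derive_n g l x * Dterm (alpha - INR l) f x m).
  assert (HT : forall l, ex_series (fun m => Rabs (T l m))).
  { intro l. apply ex_series_ext with (fun m => scal (Rabs (gbinom alpha l * Derive_n g l x)) (Rabs (Dterm (alpha - INR l) f x m))).
    intro m. unfold T. symmetry. apply Rabs_mult.
    apply (ex_series_scal_l (K:=R_AbsRing) (V:=R_NormedModule)). apply H7. }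
  assert (HD := double_series T HT H9).
  unfold Dfrac at 1.
  rewrite (Series_ext _ (fun k => ssum (fun l => T l (k - l)%nat) (S k))).
  2:{ intro k. unfold T. apply pointwise; auto. }
  rewrite (is_series_unique _ _ HD).
  apply Series_ext. intro l. unfold T, Dfrac. apply Series_scal_l.
Qed.
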